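(* Let $G^\sigma$ be a lower-optimal oriented graph and let $x$ be a vertex lying on a cycle of $G$. Then (i) $sr(G^\sigma)=sr(G^\sigma-x)$; (ii) $\alpha(G)=\alpha(G-x)$; (iii) $d(G)=d(G-x)+1$; (iv) $G^\sigma-x$ is lower-optimal; (v) $x$ lies on exactly one cycle of $G$, and $x$ is not a quasi-pendant vertex of $G$.
   Context: An oriented graph $G^\sigma$ is obtained from a simple graph $G$ by assigning a direction to each edge. Its skew-adjacency matrix $S(G^\sigma)=[s_{x,y}]$ has $s_{x,y}=1$ if there is an arc from $x$ to $y$, $s_{x,y}=-1$ if there is an arc from $y$ to $x$, and $0$ otherwise; $sr(G^\sigma)$ is the rank of $S(G^\sigma)$. $\alpha(G)$ is the independence number. $d(G)=|E_G|-|V_G|+\omega(G)$, with $\omega(G)$ the number of components. For every oriented graph one has $sr(G^\sigma)+2\alpha(G)\geqslant 2|V_G|-2d(G)$, and $G^\sigma$ is called lower-optimal if equality holds. $G^\sigma-x$ is obtained by deleting $x$ and its incident arcs. A pendant vertex has degree one; a quasi-pendant vertex is a vertex adjacent to a pendant vertex. *)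

(* Defs.v *)
From HB Require Import structures.
From mathcomp Require Import all_boot all_order all_algebra.
Set Implicit Arguments. Unset Strict Implicit. Unset Printing Implicit Defensive.
Import Order.TTheory GRing.Theory Num.Theory.

(* An oriented graph G^sigma is given by a finite ambient type T, a vertex
   set V : {set T}, and an arc relation [a] on T (a u v = arc from u to v).
   Only arcs between vertices of V are part of G^sigma.  G^sigma - x is the
   oriented graph with vertex set V :\ x and the same arc relation. *)

Definition oriented (T : finType) (a : rel T) : Prop :=
  (forall u, ~~ a u u) /\ (forall u v, ~~ (a u v && a v u)).

Definition adj (T : finType) (V : {set T}) (a : rel T) : rel T :=
  fun u v => [&& u \in V, v \in V & a u v || a v u].

Definition skew_entry (T : finType) (a : rel T) (u v : T) : rat :=
  (a u v)%:R - (a v u)%:R.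

Definition skew_adj (T : finType) (V : {set T}) (a : rel T) : 'M[rat]_#|V| :=
  \matrix_(i, j) skew_entry a (enum_val i) (enum_val j).

Definition sr (T : finType) (V : {set T}) (a : rel T) : nat :=
  \rank (skew_adj V a).

Definition independent (T : finType) (V : {set T}) (a : rel T) (I : {set T}) :=
  (I \subset V) && [forall u in I, forall v in I, ~~ adj V a u v].

Definition alpha (T : finType) (V : {set T}) (a : rel T) : nat :=
  \max_(I : {set T} | independent V a I) #|I|.

Definition edges (T : finType) (V : {set T}) (a : rel T) : {set {set T}} :=
  [set E : {set T} | [exists u, exists v, (E == [set u; v]) && adj V a u v]].

Definition ncomp (T : finType) (V : {set T}) (a : rel T) : nat :=
  n_comp (adj V a) (mem V).

Definition dim_cyc (T : finType) (V : {set T}) (a : rel T) : int :=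
  (#|edges V a|%:Z - #|V|%:Z + (ncomp V a)%:Z)%R.

Definition lower_optimal (T : finType) (V : {set T}) (a : rel T) : Prop :=
  ((sr V a)%:Z + 2 * (alpha V a)%:Z = 2 * #|V|%:Z - 2 * dim_cyc V a)%R.

Definition is_cycle (T : finType) (V : {set T}) (a : rel T) (p : seq T) : bool :=
  [&& uniq p, 3 <= size p & cycle (adj V a) p].

(* the edge set of the cycle p (identifies the cycle as a subgraph) *)
Definition cycle_edges (T : finType) (p : seq T) : {set {set T}} :=
  [set [set u; next p u] | u in p].

Definition on_cycle (T : finType) (V : {set T}) (a : rel T) (x : T) : Prop :=
  exists p, is_cycle V a p /\ x \in p.

Definition on_unique_cycle (T : finType) (V : {set T}) (a : rel T) (x : T) : Prop :=
  on_cycle V a x /\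
  forall p q, is_cycle V a p -> x \in p -> is_cycle V a q -> x \in q ->
    cycle_edges p = cycle_edges q.

Definition degree (T : finType) (V : {set T}) (a : rel T) (u : T) : nat :=
  #|[set v | adj V a u v]|.

Definition pendant (T : finType) (V : {set T}) (a : rel T) (u : T) : bool :=
  (u \in V) && (degree V a u == 1%N).

Definition quasi_pendant (T : finType) (V : {set T}) (a : rel T) (x : T) : bool :=
  (x \in V) && [exists y, adj V a x y && pendant V a y].

(* Main.v *)
Require Import Defs.
From HB Require Import structures.
From mathcomp Require Import all_boot all_order all_algebra.
From mathcomp Require Import ring zify.
Set Implicit Arguments. Unset Strict Implicit. Unset Printing Implicit Defensive.
Import Order.TTheory GRing.Theory Num.Theory.
Open Scope ring_scope.
Lemma rank_mxsub (F : fieldType) m n m' n' (f : 'I_m' -> 'I_m) (g : 'I_n' -> 'I_n)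
  (A : 'M[F]_(m, n)) : (\rank (mxsub f g A) <= \rank A)%N.
Proof.
have -> : mxsub f g A = rowsub f 1%:M *m A *m colsub g 1%:M.
  rewrite -mulmxA mul_rowsub_mx mul1mx mulmx_colsub mulmx1.
  by apply/matrixP=> i j; rewrite !mxE.
by rewrite (leq_trans (mxrankM_maxl _ _)) // mxrankM_maxr.
Qed.

Lemma ord2_cases (i : 'I_2) : i = ord0 \/ i = lift ord0 ord0.
Proof. case: i => [[|[|k]] Hk]; [left|right|]; try exact: val_inj. by []. Qed.

Lemma rank_pendant_mx (F : fieldType) m (M : 'M[F]_(m + 2)) (s : F) :
  s != 0 ->
  (forall j, M (rshift m 0) j = if j == rshift m 1 then s else 0) ->
  (forall i, M i (rshift m 0) = if i == rshift m 1 then - s else 0) ->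
  (\rank (ulsubmx M) + 2 <= \rank M)%N.
Proof.
move=> s0 Hr Hc.
set A := ulsubmx M; set B := ursubmx M; set C := dlsubmx M; set D := drsubmx M.
pose B' : 'M[F]_(m, 2) := \matrix_(i, j) if j == ord0 then B i (lift ord0 ord0) / s else 0.
pose E : 'M[F]_(2, m) := \matrix_(i, j) if i == ord0 then - C (lift ord0 ord0) j / s else 0.
have C0 : forall j, C ord0 j = 0.
  by move=> j; rewrite /C !mxE Hr eq_lrshift.
have B0 : forall i, B i ord0 = 0.
  by move=> i; rewrite /B !mxE Hc eq_lrshift.
have D0 : forall j, D ord0 j = if j == lift ord0 ord0 then s else 0.
  by move=> j; rewrite /D !mxE Hr eq_rshift.
have D0' : forall i, D i ord0 = if i == lift ord0 ord0 then - s else 0.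
  by move=> i; rewrite /D !mxE Hc eq_rshift.
have HMb : M = block_mx A B C D by rewrite submxK.
clearbody A B C D.
have e1 : B' *m C = 0.
  apply/matrixP=> i j; rewrite !mxE big_ord_recl big_ord1 !mxE /= C0.
  by rewrite mulr0 add0r mul0r.
have e2 : B - B' *m D = 0.
  apply/matrixP=> i j; rewrite !mxE big_ord_recl big_ord1 !mxE /= D0 mul0r addr0.
  case: (ord2_cases j) => ->; rewrite /= ?B0; field=> //.
have e3 : C - D *m E = 0.
  apply/matrixP=> i j; rewrite !mxE big_ord_recl big_ord1 !mxE /= D0' mulr0 addr0.
  case: (ord2_cases i) => ->; rewrite /= ?C0; field=> //.
pose L : 'M[F]_(m + 2) := block_mx 1%:M (- B') 0 1%:M.
pose R : 'M[F]_(m + 2) := block_mx 1%:M 0 (- E) 1%:M.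
have HM : L *m M *m R = block_mx A 0 0 D.
  rewrite HMb /L /R !mulmx_block.
  rewrite !mul1mx !mul0mx !mulmx1 !mulmx0 !add0r !mulNmx e1.
  have -> : B + - (B' *m D) = 0 by rewrite e2.
  by rewrite mul0mx addr0 subr0 mulmxN e3.
pose D' : 'M[F]_2 := \matrix_(i, j) if i == ord0 then (if j == ord0 then D (lift ord0 ord0) (lift ord0 ord0) / (s * s) else - s^-1) else (if j == ord0 then s^-1 else 0).
have HD : D' *m D = 1%:M.
  have n01 : (ord0 == lift ord0 ord0 :> 'I_2) = false by [].
  have n10 : (lift ord0 ord0 == ord0 :> 'I_2) = false by [].
  apply/matrixP=> i j; rewrite !mxE big_ord_recl big_ord1 !mxE D0.
  have D1 : D (lift ord0 ord0) ord0 = - s by rewrite D0'.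
  case: (ord2_cases i) => ->; case: (ord2_cases j) => ->;
  rewrite ?D1 ?eqxx ?n01 ?n10 ?mulr1n ?mulr0n /=; try move: (D _ _) => d; clear -s0; field=> //.
have rD : \rank D = 2%N.
  apply/eqP; rewrite eqn_leq rank_leq_col /= -{1}(mxrank1 F 2) -HD.
  exact: mxrankM_maxr.
have -> : (\rank A + 2 = \rank (block_mx A (0 : 'M_(m, 2)) 0 D))%N.
  by rewrite rank_diag_block_mx rD.
rewrite -HM.
by rewrite (leq_trans (mxrankM_maxl _ _)) // mxrankM_maxr.
Qed.

Lemma split_lshift m n (i : 'I_m) : split (lshift n i) = inl _ i.
Proof. exact: (unsplitK (inl _ i)). Qed.
Lemma split_rshift m n (i : 'I_n) : split (rshift m i) = inr _ i.
Proof. exact: (unsplitK (inr _ i)). Qed.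

Section Graph.
Variable T : finType.
Variable a : rel T.
Hypothesis ora : oriented a.
Implicit Types (S I : {set T}).

Lemma skew_entryN u v : skew_entry a u v = - skew_entry a v u.
Proof. by rewrite /skew_entry opprB. Qed.

Lemma sr_sub (S' S : {set T}) : S' \subset S -> (sr S' a <= sr S a)%N.
Proof.
move=> sub.
have [->|[x0 Hx0]] := set_0Vmem S'.
  by rewrite /sr (leq_trans (rank_leq_row _)) // cards0.
pose g (i : 'I_#|S'|) := enum_rank_in (subsetP sub _ Hx0) (enum_val i).
rewrite /sr; have -> : skew_adj S' a = mxsub g g (skew_adj S a).
  apply/matrixP=> i j; rewrite !mxE /g !enum_rankK_in //; exact/(subsetP sub)/enum_valP.
exact: rank_mxsub.
Qed.


Lemma adj_irr S u : ~~ adj S a u u.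
Proof. by rewrite /adj orbb; case: ora => ir _; rewrite (negbTE (ir u)) !andbF. Qed.

Lemma adj_sym S : symmetric (adj S a).
Proof. by move=> u v; rewrite /adj andbCA orbC. Qed.

Lemma adj_in S u v : adj S a u v -> (u \in S) && (v \in S).
Proof. by case/and3P=> -> ->. Qed.

Lemma skew_entry0 S u v : ~~ adj S a u v -> u \in S -> v \in S -> skew_entry a u v = 0.
Proof.
move=> nadj uS vS; move: nadj; rewrite /adj uS vS /= negb_or.
by case/andP=> /negbTE h1 /negbTE h2; rewrite /skew_entry h1 h2 subrr.
Qed.

Lemma skew_entry_nz S u v : adj S a u v -> skew_entry a u v != 0.
Proof.
case/and3P=> _ _; case: ora => _ as1; move: (as1 u v).
by rewrite /skew_entry; case: (a u v); case: (a v u).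
Qed.

Lemma sr_pendant (S : {set T}) x y : x \in S -> y \in S -> adj S a x y ->
  (forall w, adj S a y w -> w = x) -> (sr (S :\ x :\ y) a + 2 <= sr S a)%N.
Proof.
move=> Hx Hy Hxy Hyw.
have xy : x != y by apply: contraNneq (adj_irr S x) => {2}->.
set S2 := S :\ x :\ y.
pose g (i : 'I_(#|S2| + 2)) : T :=
  match split i with inl k => enum_val k | inr t => if t == ord0 then y else x end.
have gS i : g i \in S.
  rewrite /g; case: (split i) => [k|t]; last by case: ifP.
  by move: (enum_valP k); rewrite !inE => /and3P[].
pose h i := enum_rank_in Hy (g i).
have HN : forall i j, mxsub h h (skew_adj S a) i j = skew_entry a (g i) (g j).
  by move=> i j; rewrite !mxE /h !enum_rankK_in.
apply: leq_trans (rank_mxsub h h (skew_adj S a)).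
rewrite /sr; have -> : skew_adj S2 a = ulsubmx (mxsub h h (skew_adj S a)).
  apply/matrixP=> i j; by rewrite [RHS]mxE [RHS]mxE HN /g !split_lshift mxE.
have gl k : g (lshift 2 k) = enum_val k by rewrite /g split_lshift.
have gr t : g (rshift #|S2| t) = if t == ord0 then y else x by rewrite /g split_rshift.
have Hr j : skew_entry a (g (rshift #|S2| 0)) (g j) = if j == rshift #|S2| 1 then skew_entry a y x else 0.
  rewrite gr /= -(splitK j); case: (split j) => [k|t] /=.
    rewrite gl eq_lrshift; apply: (@skew_entry0 S) => //; last by rewrite -gl gS.
    apply/negP=> /Hyw ex; move: (enum_valP k); rewrite ex !inE eqxx.
    by rewrite andbF.
  rewrite gr eq_rshift; case: (ord2_cases t) => -> /=.
    by rewrite /skew_entry subrr.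
  by [].
apply: (rank_pendant_mx (s := skew_entry a y x)).
- by apply: (@skew_entry_nz S); rewrite adj_sym.
- by move=> j; rewrite HN Hr.
- by move=> i; rewrite HN skew_entryN Hr; case: ifP => //; rewrite oppr0.
Qed.

Lemma independentP S I : reflect (I \subset S /\ forall u v, u \in I -> v \in I -> ~~ adj S a u v)
  (independent S a I).
Proof.
apply: (iffP andP) => [[H1 /forallP H2]|[H1 H2]]; split => //.
  by move=> u v Hu Hv; move: (H2 u); rewrite Hu /= => /forallP /(_ v); rewrite Hv.
by apply/forallP=> u; apply/implyP=> Hu; apply/forallP=> v; apply/implyP=> Hv; apply: H2.
Qed.

Lemma adj_sub S' S u v : S' \subset S -> u \in S' -> v \in S' -> adj S a u v = adj S' a u v.
Proof. by move=> sub Hu Hv; rewrite /adj Hu Hv !(subsetP sub). Qed.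

Lemma alpha_sub S' S : S' \subset S -> (alpha S' a <= alpha S a)%N.
Proof.
move=> sub; apply/bigmax_leqP => I /independentP [HI1 HI2].
apply: leq_bigmax_cond; apply/independentP; split; first exact: subset_trans sub.
by move=> u v Hu Hv; rewrite (adj_sub sub) ?(subsetP HI1) //; apply: HI2.
Qed.

Lemma alpha_ex S : exists2 I, independent S a I & alpha S a = #|I|.
Proof.
have H0 : independent S a set0 by apply/independentP; split; rewrite ?sub0set // => u v; rewrite inE.
rewrite /alpha (bigop.bigmax_eq_arg set0 H0); case: arg_maxnP => // I HI _.
by exists I.
Qed.

Lemma alpha_add S' S y : S' \subset S -> y \in S -> y \notin S' ->
  (forall w, w \in S' -> ~~ adj S a y w) -> (alpha S' a + 1 <= alpha S a)%N.
Proof.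
move=> sub Hy nyS Hn; case: (alpha_ex S') => I /independentP [HI1 HI2] ->.
have yI : y \notin I by apply: contra nyS; apply: (subsetP HI1).
have -> : (#|I| + 1 = #|y |: I|)%N by rewrite cardsU1 yI add1n addn1.
apply: leq_bigmax_cond; apply/independentP; split.
  by rewrite subUset sub1set Hy (subset_trans HI1 sub).
move=> u v; rewrite !inE => /predU1P[->|Hu] /predU1P[->|Hv].
- exact: adj_irr.
- exact: Hn (subsetP HI1 _ Hv).
- by rewrite adj_sym; exact: Hn (subsetP HI1 _ Hu).
- by rewrite (adj_sub sub) ?(subsetP HI1) //; apply: HI2.
Qed.
End Graph.

Close Scope ring_scope.

Section Conn.
Variable T : finType.
Variable a : rel T.
Hypothesis ora : oriented a.
Implicit Types (S I N : {set T}).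

Lemma sym_connect_sym (e : rel T) : symmetric e -> connect_sym e.
Proof.
move=> se x y; have H := connect_rev e x y; simpl in H; rewrite -H.
by apply: eq_connect => u w /=; rewrite se.
Qed.

Lemma adj_csym S : connect_sym (adj S a).
Proof. apply: sym_connect_sym; exact: adj_sym. Qed.

Lemma adj_subrel S' S : S' \subset S -> subrel (adj S' a) (adj S a).
Proof.
move=> sub u v /and3P[Hu Hv H]; by rewrite /adj !(subsetP sub) // H.
Qed.

Lemma connect_subset S' S : S' \subset S -> subrel (connect (adj S' a)) (connect (adj S a)).
Proof.
move=> sub; apply: connect_sub => u v H; apply: connect1; exact: adj_subrel H.
Qed.

Lemma connect_in S u w : connect (adj S a) u w -> u \in S -> w \in S.
Proof.
case/connectP=> p; elim: p u => [|z p IH] u /=; first by move=> _ ->.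
case/andP=> H1 H2 Hw Hu; apply: (IH z H2 Hw); by case/and3P: H1.
Qed.

Lemma connect_avoid S v s t : connect (adj S a) s t -> ~~ connect (adj S a) s v ->
  connect (adj (S :\ v) a) s t.
Proof.
case/connectP=> p Hp -> nsv; apply/connectP; exists p => //.
have Hall : all (predC1 v) (s :: p).
  apply/allP=> z /(path_connect Hp) szv /=; apply/eqP=> zv; move: nsv.
  by rewrite -zv szv.
move: Hall Hp; apply: sub_in_path => u w; rewrite !inE /= => uv wv /and3P[Hu Hw H].
by rewrite /adj !inE (negPf uv) (negPf wv) Hu Hw H.
Qed.

Lemma connect_reach S v r : connect (adj S a) r v -> r != v ->
  exists2 u, adj S a v u & connect (adj (S :\ v) a) r u.
Proof.
case/connectP=> p; elim: p r => [|z p IH] r /=; first by move=> _ ->; rewrite eqxx.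
case/andP=> H1 H2 Hl rv.
have [zv|zv] := eqVneq z v.
  by exists r; [rewrite adj_sym -zv | exact: connect0].
have [u Hu Hc] := IH z H2 Hl zv.
exists u => //; apply: connect_trans Hc; apply: connect1.
by case/and3P: H1 => Hr Hz H; rewrite /adj !inE rv zv Hr Hz H.
Qed.

Lemma ncompE S : ncomp S a = #|[set r in S | roots (adj S a) r]|.
Proof. by rewrite /ncomp; apply: eq_card => r; rewrite !inE andbC. Qed.

Lemma root_in S u : u \in S -> fingraph.root (adj S a) u \in S.
Proof. exact: connect_in (connect_root _ u). Qed.

Lemma ncomp_drop S v : v \in S ->
  (ncomp (S :\ v) a + 1 <= ncomp S a + #|fingraph.root (adj (S :\ v) a) @: [set u | adj S a v u]|)%N.
Proof.
move=> Hv; set W := S :\ v; set eS := adj S a; set eW := adj W a.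
set N := [set u | adj S a v u]; set f := fingraph.root eW.
rewrite !ncompE; set RS := [set r in S | roots eS r]; set RW := [set r in W | roots eW r].
set R1 := [set r in RW | ~~ connect eS r v].
set R2 := [set r in RW | connect eS r v].
have HRW : #|RW| = (#|R1| + #|R2|)%N.
  rewrite addnC /R1 /R2 -(cardsID [set r | connect eS r v] RW).
  by congr (_ + _)%N; apply: eq_card => r; rewrite !inE andbC.
have HR2 : R2 \subset f @: N.
  apply/subsetP=> r; rewrite !inE => /andP[/andP[/andP[rv rS] rr] crv].
  have [u Hu Hc] := connect_reach crv rv.
  apply/imsetP; exists u; first by rewrite inE.
  rewrite -(eqP rr); apply/(fingraph.rootP (adj_csym W)); exact: Hc.
have vRS : fingraph.root eS v \in RS by rewrite inE root_in // roots_root //; exact: adj_csym.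
have HR1 : (#|R1| <= #|RS :\ fingraph.root eS v|)%N.
  have inj : {in R1 &, injective (fingraph.root eS)}.
    move=> r1 r2; rewrite !inE => /andP[/andP[/andP[_ r1S] rr1] nc1] /andP[/andP[/andP[_ r2S] rr2] nc2] Heq.
    have c12 : connect eS r1 r2 by apply/(fingraph.rootP (adj_csym S)).
    have c12' := connect_avoid c12 nc1.
    by rewrite -(eqP rr1) -(eqP rr2); apply/(fingraph.rootP (adj_csym W)).
  rewrite -(card_in_imset inj); apply: subset_leq_card; apply/subsetP=> z.
  case/imsetP=> r; rewrite !inE => /andP[/andP[/andP[_ rS] _] nc] ->.
  rewrite root_in // roots_root ?andbT; last exact: adj_csym.
  apply: contra nc => /eqP Hr; apply/(fingraph.rootP (adj_csym S)); exact: Hr.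
have H1 : (#|RS :\ fingraph.root eS v| + 1 = #|RS|)%N by rewrite (cardsD1 (fingraph.root eS v) RS) vRS add1n addn1.
rewrite HRW -H1 addnAC.
by apply: leq_add; [apply: leq_add | apply: subset_leq_card].
Qed.

Lemma edgesP S E : reflect (exists u w, E = [set u; w] /\ adj S a u w) (E \in edges S a).
Proof.
rewrite inE; apply: (iffP existsP) => [[u /existsP[w /andP[/eqP-> H]]]|[u [w [-> H]]]].
  by exists u, w.
by exists u; apply/existsP; exists w; rewrite eqxx H.
Qed.

Lemma edges_drop S v : v \in S ->
  #|edges S a| = (#|edges (S :\ v) a| + #|[set u | adj S a v u]|)%N.
Proof.
move=> Hv; set N := [set u | adj S a v u].
have Nv : v \notin N by rewrite inE adj_irr.
have inj : {in N &, injective (fun u => [set v; u])}.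
  move=> u1 u2 H1 H2 Heq; have : u1 \in [set v; u2] by rewrite -Heq !inE eqxx orbT.
  rewrite !inE => /orP[/eqP e|/eqP //]; by move: H1; rewrite e (negPf Nv).
have Hsplit : edges S a = edges (S :\ v) a :|: [set [set v; u] | u in N].
  apply/setP=> E; apply/edgesP/setUP.
    case=> u [w [-> H]].
    have [uv|uv] := eqVneq u v.
      by right; apply/imsetP; exists w; rewrite ?inE -uv.
    have [wv|wv] := eqVneq w v.
      right; apply/imsetP; exists u; last by rewrite wv setUC.
      by rewrite inE -wv adj_sym.
    left; apply/edgesP; exists u, w; split => //.
    by case/and3P: H => Hu Hw H; rewrite /adj !inE uv wv Hu Hw H.
  case=> [/edgesP [u [w [-> H]]]|/imsetP[u Hu ->]].
    exists u, w; split => //; exact: adj_subrel (subsetDl _ _) _ _ H.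
  by exists v, u; split => //; rewrite inE in Hu.
have Hdisj : edges (S :\ v) a :&: [set [set v; u] | u in N] = set0.
  apply/setP=> E; rewrite in_setI in_set0; apply/negP=> /andP[/edgesP[u [w [-> H]]] /imsetP[z _ Hz]].
  have : v \in [set u; w] by rewrite Hz !inE eqxx.
  case/and3P: H => Hu Hw _; rewrite !inE => /orP[] /eqP e.
    by move: Hu; rewrite -e !inE eqxx.
  by move: Hw; rewrite -e !inE eqxx.
by rewrite Hsplit -(card_in_imset inj) -cardsUI Hdisj cards0 addn0.
Qed.

Definition nbr S v := [set u | adj S a v u].
Definition nimg S v := fingraph.root (adj (S :\ v) a) @: nbr S v.

Lemma dim_drop S v : v \in S ->
  (dim_cyc (S :\ v) a + (#|nbr S v|)%:Z - (#|nimg S v|)%:Z <= dim_cyc S a)%R.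
Proof.
move=> Hv; have H1 := ncomp_drop Hv; have H2 := edges_drop Hv.
have H3 : #|S| = (#|S :\ v| + 1)%N by rewrite (cardsD1 v S) Hv add1n addn1.
rewrite /dim_cyc /nimg /nbr; move: H1 H2 H3.
set x1 := ncomp _ _; set x2 := ncomp _ _; set x3 := #|_ @: _|; set x4 := #|edges _ _|.
set x5 := #|edges _ _|; set x6 := #|[set u | _]|; set x7 := #|S|; set x8 := #|S :\ v|.
move=> H1 H2 H3; lia.
Qed.

Lemma imset_drop1 (f : T -> T) N b : b \in N -> f b \in f @: (N :\ b) -> (#|f @: N| + 1 <= #|N|)%N.
Proof.
move=> Hb Hfb.
have sub : f @: N \subset f @: (N :\ b).
  apply/subsetP=> z /imsetP[w Hw ->]; have [->|wb] := eqVneq w b; first exact: Hfb.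
  by apply/imsetP; exists w; rewrite // !inE wb.
apply: leq_trans (leq_add (subset_leq_card sub) (leqnn 1)) _.
apply: leq_trans (leq_add (leq_imset_card _ _) (leqnn 1)) _.
by rewrite (cardsD1 b N) Hb add1n addn1.
Qed.

Lemma imset_drop2 (f : T -> T) N b t : b \in N -> t \in N -> b != t ->
  f b \in f @: (N :\ b :\ t) -> f t \in f @: (N :\ b :\ t) -> (#|f @: N| + 2 <= #|N|)%N.
Proof.
move=> Hb Ht bt Hfb Hft.
have sub : f @: N \subset f @: (N :\ b :\ t).
  apply/subsetP=> z /imsetP[w Hw ->]; have [->|wb] := eqVneq w b; first exact: Hfb.
  have [->|wt] := eqVneq w t; first exact: Hft.
  by apply/imsetP; exists w; rewrite // !inE wb wt.
apply: leq_trans (leq_add (subset_leq_card sub) (leqnn 2)) _.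
apply: leq_trans (leq_add (leq_imset_card _ _) (leqnn 2)) _.
rewrite (cardsD1 b N) Hb (cardsD1 t (N :\ b)) !inE eq_sym bt Ht /=.
lia.
Qed.

Lemma collapse1 S v u1 u2 : u1 \in nbr S v -> u2 \in nbr S v -> u1 != u2 ->
  connect (adj (S :\ v) a) u1 u2 -> (#|nimg S v| + 1 <= #|nbr S v|)%N.
Proof.
move=> H1 H2 u12 c; apply: (imset_drop1 H2); apply/imsetP; exists u1.
  by rewrite in_setD1 u12 H1.
apply/(fingraph.rootP (adj_csym _)); rewrite adj_csym; exact: c.
Qed.

Lemma collapse2 S v p q c d : p \in nbr S v -> q \in nbr S v -> c \in nbr S v -> d \in nbr S v ->
  p != q -> c != d -> c != p -> c != q ->
  connect (adj (S :\ v) a) p q -> connect (adj (S :\ v) a) c d -> (#|nimg S v| + 2 <= #|nbr S v|)%N.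
Proof.
move=> Hp Hq Hc Hd pq cd cp cq cpq ccd.
set f := fingraph.root (adj (S :\ v) a).
have E1 : f p = f q by apply/(fingraph.rootP (adj_csym _)).
have E2 : f c = f d by apply/(fingraph.rootP (adj_csym _)).
have mem z : z \in nbr S v -> z != q -> forall t, z != t -> f z \in f @: (nbr S v :\ q :\ t).
  by move=> Hz zq t zt; apply/imsetP; exists z => //; rewrite !in_setD1 zt zq Hz.
have [dp|dp] := eqVneq d p.
  apply: (@imset_drop2 f _ q c) => //; first by rewrite eq_sym.
  - by rewrite -E1; apply: mem => //; rewrite eq_sym.
  - by rewrite E2 dp; apply: mem => //; rewrite eq_sym.
have [dq|dq] := eqVneq d q.
  apply: (@imset_drop2 f _ q c) => //; first by rewrite eq_sym.
  - by rewrite -E1; apply: mem => //; rewrite eq_sym.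
  - by rewrite E2 dq -E1; apply: mem => //; rewrite eq_sym.
apply: (@imset_drop2 f _ q d) => //; first by rewrite eq_sym.
- by rewrite -E1; apply: mem => //; rewrite eq_sym.
- by rewrite -E2; apply: mem => //; rewrite eq_sym.
Qed.

Lemma path_avoid S z x p : path (adj S a) x p -> z \notin x :: p -> path (adj (S :\ z) a) x p.
Proof.
move=> Hp Hz; have Hall : all (predC1 z) (x :: p).
  by apply/allP=> w Hw /=; apply: contraNneq Hz => <-.
move: Hall Hp; apply: sub_in_path => u w; rewrite !inE /= => uz wz /and3P[Hu Hw H].
by rewrite /adj !inE (negPf uz) (negPf wz) Hu Hw H.
Qed.

Lemma cyc_nbrs S p z : is_cycle S a p -> z \in p ->
  [/\ next p z != prev p z, adj S a z (next p z), adj S a z (prev p z) &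
      connect (adj (S :\ z) a) (next p z) (prev p z)].
Proof.
case/and3P=> up sz cp Hz; case: (rot_to Hz) => i r Hr.
rewrite -(next_rot i up) -(prev_rot i up) Hr.
have up' : uniq (z :: r) by rewrite -Hr rot_uniq.
have cp' : cycle (adj S a) (z :: r) by rewrite -Hr rot_cycle.
have sr : (2 <= size r)%N by move: sz; rewrite -(size_rot i) Hr.
case: r up' cp' sr {Hr} => [|u r1] //; case/lastP: r1 => [|r2 w] // up' cp' _.
have -> : next (z :: u :: rcons r2 w) z = u by rewrite /= eqxx.
have -> : prev (z :: u :: rcons r2 w) z = w.
  rewrite prev_nth mem_head memNindex; last by case/andP: up'.
  by rewrite -[size _]/((size (z :: u :: rcons r2 w)).-1) nth_last /= last_rcons.
move: cp'; rewrite /cycle rcons_cons /= => /andP[Hzu]; rewrite rcons_path last_rcons.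
case/andP=> Hp Hwz; split => //; last 2 first.
- by rewrite adj_sym.
- apply/connectP; exists (rcons r2 w); last by rewrite last_rcons.
  apply: path_avoid => //; by case/andP: up'.
apply/negP => /eqP uw; case/andP: up' => _ /andP[]; by rewrite uw mem_rcons mem_head.
Qed.
End Conn.

Section LB.
Variable T : finType.
Variable a : rel T.
Hypothesis ora : oriented a.
Implicit Types (S I N : {set T}).

Lemma dim_mono S v : v \in S -> (dim_cyc (S :\ v) a <= dim_cyc S a)%R.
Proof.
move=> Hv; have H := dim_drop ora Hv; have H2 := leq_imset_card (fingraph.root (adj (S :\ v) a)) (nbr a S v).
move: H H2; rewrite /nimg; set x := dim_cyc _ _; set y := dim_cyc _ _; lia.
Qed.

Lemma dim_drop1 S v u1 u2 : v \in S -> u1 \in nbr a S v -> u2 \in nbr a S v -> u1 != u2 ->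
  connect (adj (S :\ v) a) u1 u2 -> (dim_cyc (S :\ v) a + 1 <= dim_cyc S a)%R.
Proof.
move=> Hv H1 H2 H12 c; have H := dim_drop ora Hv; have H3 := collapse1 H1 H2 H12 c.
move: H H3; set x := dim_cyc _ _; set y := dim_cyc _ _; lia.
Qed.

Definition collapse S v := [exists u1, exists u2,
  [&& u1 \in nbr a S v, u2 \in nbr a S v, u1 != u2 & connect (adj (S :\ v) a) u1 u2]].

Lemma longest S : (exists v, v \in S) -> (forall v, v \in S -> ~~ collapse S v) ->
  exists2 v0, v0 \in S & (nbr a S v0 = set0 \/ exists2 x, adj S a x v0 & forall w, adj S a v0 w -> w = x).
Proof.
case=> v Hv Hnc.
pose P k := [exists v0, exists t : k.-tuple T, [&& v0 \in S, path (adj S a) v0 t & uniq (v0 :: t)]].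
have P0 : P 0%N by apply/existsP; exists v; apply/existsP; exists [tuple]; rewrite Hv.
have Pub k : P k -> (k <= #|T|)%N.
  case/existsP=> v0 /existsP[t /and3P[_ _ u]].
  by rewrite -(size_tuple t) ltnW // -[(size t).+1]/(size (v0 :: t)) -(card_uniqP u) max_card.
case: (ex_maxnP (ex_intro _ 0%N P0) Pub) => k /existsP[v0 /existsP[t /and3P[Hv0 Hp Hu]]] Hmax.
exists v0 => //.
have Hin w : adj S a v0 w -> w \in (t : seq T).
  move=> Hw; apply/negPn/negP => Hwt.
  have : P k.+1.
    apply/existsP; exists w; apply/existsP; exists [tuple of v0 :: t].
    have wS : w \in S by case/and3P: Hw.
    rewrite /= Hp adj_sym Hw wS /= inE negb_or Hwt andbT; apply/andP; split; last exact: Hu.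
    apply/eqP => wv; move: Hw.
    by rewrite wv (negPf (adj_irr ora S v0)).
  by move/Hmax; rewrite ltnn.
case: t Hp Hu Hin => [[|x t'] //= Hsz]; first by move=> _ _ Hin; left; apply/setP=> w; rewrite !inE; apply/negP=> /Hin.
move=> /andP[Hx Hp] Hu Hin; right; exists x; first by rewrite adj_sym.
move=> w Hw; have := Hin w Hw; rewrite inE => /orP[/eqP //|wt].
apply/eqP/negPn/negP => wx; move: (Hnc v0 Hv0); apply/negP/negPn.
apply/existsP; exists x; apply/existsP; exists w.
rewrite !inE Hx Hw eq_sym wx /=.
have Hp' : path (adj (S :\ v0) a) x t' by apply: path_avoid Hp _; case/andP: Hu.
by apply: (path_connect Hp'); rewrite inE wt orbT.
Qed.

Lemma dim_ge0_empty S : #|S| = 0%N -> (0 <= dim_cyc S a)%R.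
Proof. by move=> H; rewrite /dim_cyc H; lia. Qed.

Lemma LB S : (2 * (#|S|)%:Z - 2 * dim_cyc S a <= (sr S a)%:Z + 2 * (alpha S a)%:Z)%R.
Proof.
have [n Hn] : exists n, (#|S| <= n)%N by exists #|S|.
elim: n S Hn => [|n IH] S Hn.
  have H0 : #|S| = 0%N by apply/eqP; rewrite -leqn0.
  have := dim_ge0_empty H0; rewrite H0; lia.
have [/existsP[v /andP[Hv /existsP[u1 /existsP[u2 /and4P[H1 H2 H12 Hc]]]]]|Hnc] :=
  boolP [exists v, (v \in S) && collapse S v].
  have Hd := dim_drop1 Hv H1 H2 H12 Hc.
  have Hs : (#|S :\ v| <= n)%N by move: Hn; rewrite (cardsD1 v S) Hv.
  have := IH _ Hs; have := sr_sub a (subsetDl S [set v]); have := alpha_sub a (subsetDl S [set v]).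
  have : #|S| = (#|S :\ v| + 1)%N by rewrite (cardsD1 v S) Hv add1n addn1.
  move: Hd; set d1 := dim_cyc _ _; set d2 := dim_cyc _ _; lia.
have [H0|[v Hv]] := set_0Vmem S.
  have H0' : #|S| = 0%N by rewrite H0 cards0.
  have := dim_ge0_empty H0'; rewrite H0'; lia.
have Hnc' : forall v, v \in S -> ~~ collapse S v.
  by move=> w Hw; apply: contra Hnc => Hc; apply/existsP; exists w; rewrite Hw.
have [v0 Hv0 [Hiso|[x Hx Hxw]]] := longest (ex_intro _ v Hv) Hnc'.
  set S' := S :\ v0.
  have Hs : (#|S'| <= n)%N by move: Hn; rewrite (cardsD1 v0 S) Hv0.
  have Ha : (alpha S' a + 1 <= alpha S a)%N.
    apply: (alpha_add ora (y := v0)) => //; first exact: subsetDl.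
      by rewrite !inE eqxx.
    move=> w _; apply/negP=> Hw; have : w \in nbr a S v0 by rewrite inE.
    by rewrite Hiso inE.
  have := IH _ Hs; have := sr_sub a (subsetDl S [set v0]); have := dim_mono Hv0.
  have : #|S| = (#|S'| + 1)%N by rewrite (cardsD1 v0 S) Hv0 add1n addn1.
  move: Ha; rewrite -/S'; set d1 := dim_cyc _ _; set d2 := dim_cyc _ _; lia.
have xS : x \in S by case/and3P: Hx.
have xv : x != v0 by apply/eqP=> e; move: Hx; rewrite e (negPf (adj_irr ora S v0)).
set S2 := S :\ x :\ v0.
have cS2 : #|S| = (#|S2| + 2)%N.
  rewrite (cardsD1 x S) xS (cardsD1 v0 (S :\ x)) !inE eq_sym xv Hv0 /=; rewrite /S2; lia.
have Hs : (#|S2| <= n)%N by lia.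
have Hsr := sr_pendant ora xS Hv0 Hx Hxw.
have Ha : (alpha S2 a + 1 <= alpha S a)%N.
  apply: (alpha_add ora (y := v0)) => //.
  - by apply: subset_trans (subsetDl _ _) (subsetDl _ _).
  - by rewrite !inE eqxx.
  move=> w; rewrite !inE => /andP[wv /andP[wx _]]; apply/negP=> /Hxw e.
  by rewrite e eqxx in wx.
have Hd1 := dim_mono xS.
have Hd2 : (dim_cyc S2 a <= dim_cyc (S :\ x) a)%R by apply: dim_mono; rewrite !inE eq_sym xv.
have := IH _ Hs.
move: Hd1 Hd2 Hsr Ha; rewrite -/S2; set d1 := dim_cyc S2 a; set d2 := dim_cyc (S :\ x) a.
set d3 := dim_cyc S a; lia.
Qed.
End LB.

Lemma arith1 (d1 d2 : int) (n1 n2 : nat) : (d1 + n1%:Z - n2%:Z <= d2)%R -> d2 = (d1 + 1)%R ->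
  (n2 + 2 <= n1)%N -> False.
Proof. lia. Qed.

Section Main.
Variable T : finType.
Variable a : rel T.
Hypothesis ora : oriented a.
Implicit Types (S I N : {set T}).

Lemma main_vertex S z u1 u2 : lower_optimal S a -> z \in S ->
  u1 \in nbr a S z -> u2 \in nbr a S z -> u1 != u2 -> connect (adj (S :\ z) a) u1 u2 ->
  [/\ sr S a = sr (S :\ z) a, alpha S a = alpha (S :\ z) a,
      dim_cyc S a = (dim_cyc (S :\ z) a + 1)%R & lower_optimal (S :\ z) a].
Proof.
move=> lo Hz H1 H2 H12 Hc.
have Hd := dim_drop1 ora Hz H1 H2 H12 Hc.
have Hl := LB ora (S :\ z).
have Hs := sr_sub a (subsetDl S [set z]).
have Ha := alpha_sub a (subsetDl S [set z]).
have Hc' : #|S| = (#|S :\ z| + 1)%N by rewrite (cardsD1 z S) Hz add1n addn1.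
move: lo; rewrite /lower_optimal => lo.
move: Hd Hl lo; set d1 := dim_cyc _ _; set d2 := dim_cyc _ _ => Hd Hl lo.
split; [lia | lia | lia | lia].
Qed.

Lemma cycle_collapse S p z : is_cycle S a p -> z \in p ->
  [/\ next p z \in nbr a S z, prev p z \in nbr a S z, next p z != prev p z &
      connect (adj (S :\ z) a) (next p z) (prev p z)].
Proof.
move=> Hc Hz; have [H1 H2 H3 H4] := cyc_nbrs Hc Hz.
by split; rewrite // inE.
Qed.

Lemma cycle_in S p z : is_cycle S a p -> z \in p -> z \in S.
Proof. by move=> Hc Hz; have [_ H _ _] := cyc_nbrs Hc Hz; case/and3P: H. Qed.

Lemma edge_in_p (p : seq T) E w : E \in cycle_edges p -> w \in E -> w \in p.
Proof.
case/imsetP=> u Hu ->; rewrite !inE => /orP[]/eqP ->; by rewrite ?mem_next.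
Qed.

Lemma find_z S p q x : is_cycle S a q -> x \in p -> x \in q ->
  ~~ (cycle_edges q \subset cycle_edges p) ->
  exists z, [/\ z \in p, z \in q & [set z; next q z] \notin cycle_edges p].
Proof.
move=> Hq Hxp Hxq Hns.
have [/existsP[z /and3P[H1 H2 H3]]|Hno] := boolP [exists z, [&& z \in p, z \in q & [set z; next q z] \notin cycle_edges p]].
  by exists z.
have Hall z : z \in p -> z \in q -> [set z; next q z] \in cycle_edges p.
  move=> H1 H2; apply/negPn/negP => H3; move/negP: Hno; apply; apply/existsP; exists z.
  by rewrite H1 H2 H3.
case/and3P: Hq => uq _ _.
case: (rot_to Hxq) => i r Hr.
have uq' : uniq (x :: r) by rewrite -Hr rot_uniq.
have Hnth k : (k < size (x :: r))%N -> nth x (x :: r) k \in p.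
  elim: k => [|k IH] Hk; first by [].
  have Hk' : (k < size (x :: r))%N by apply: ltnW.
  set z := nth x (x :: r) k.
  have zq' : z \in x :: r by apply: mem_nth.
  have zq : z \in q by rewrite -(mem_rot i) Hr.
  have Hn : next q z \in p.
    by apply: (edge_in_p (Hall z (IH Hk') zq)); rewrite !inE eqxx orbT.
  move: Hn; rewrite -(next_rot i uq) Hr next_nth zq' index_uniq //.
exfalso; move/negP: Hns; apply; apply/subsetP => E /imsetP[w Hw ->]; apply: Hall => //.
have Hw' : w \in x :: r by rewrite -Hr mem_rot.
by rewrite -(nth_index x Hw'); apply: Hnth; rewrite index_mem.
Qed.

Lemma no_two S p q x : lower_optimal S a -> is_cycle S a p -> is_cycle S a q ->
  x \in p -> x \in q -> ~~ (cycle_edges q \subset cycle_edges p) -> False.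
Proof.
move=> lo Hp Hq Hxp Hxq Hns.
have [z [zp zq Hzn]] := find_z Hq Hxp Hxq Hns.
have zS := cycle_in Hp zp.
have [P1 P2 P3 P4] := cycle_collapse Hp zp.
have [Q1 Q2 Q3 Q4] := cycle_collapse Hq zq.
have [_ _ Hd1 _] := main_vertex lo zS P1 P2 P3 P4.
have up : uniq p by case/and3P: Hp.
have c1 : next q z != next p z.
  apply: contraNneq Hzn => ->; by apply/imsetP; exists z.
have c2 : next q z != prev p z.
  apply: contraNneq Hzn => ->; apply/imsetP; exists (prev p z); first by rewrite mem_prev.
  by rewrite (next_prev up) setUC.
have Hc2 := collapse2 P1 P2 Q1 Q2 P3 Q3 c1 c2 P4 Q4.
have Hd := dim_drop ora zS.
move: Hd Hd1 Hc2; set d1 := dim_cyc _ _; set d2 := dim_cyc _ _.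
exact: arith1.
Qed.
End Main.

Lemma arith2 (s s2 al al2 n2 : nat) (d d1 d2 : int) :
  (s%:Z + 2 * al%:Z = 2 * (n2 + 2)%N%:Z - 2 * d)%R ->
  (s2 + 2 <= s)%N -> (al2 + 1 <= al)%N -> d = (d1 + 1)%R -> (d2 <= d1)%R ->
  (2 * n2%:Z - 2 * d2 <= s2%:Z + 2 * al2%:Z)%R -> False.
Proof. lia. Qed.

Unset Implicit Arguments.

Theorem lemma2p2 (T : finType) (V : {set T}) (a : rel T) (x : T) :
  oriented a -> lower_optimal V a -> x \in V -> on_cycle V a x ->
  [/\ sr V a = sr (V :\ x) a,
      alpha V a = alpha (V :\ x) a,
      dim_cyc V a = (dim_cyc (V :\ x) a + 1)%R,
      lower_optimal (V :\ x) a
    & on_unique_cycle V a x /\ ~~ quasi_pendant V a x].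
Proof.
move=> ora lo Hx oc; case: (oc) => p [Hp Hxp].
have [P1 P2 P3 P4] := cycle_collapse Hp Hxp.
have [E1 E2 E3 E4] := main_vertex ora lo Hx P1 P2 P3 P4.
split => //; split.
  split => // p' q' Hp' Hx' Hq' Hxq'.
  apply/eqP; rewrite eqEsubset; apply/andP; split; apply/negPn/negP => Hns.
    exact: (no_two ora lo Hq' Hp' Hxq' Hx' Hns).
  exact: (no_two ora lo Hp' Hq' Hx' Hxq' Hns).
apply/negP => /andP[_ /existsP[y /andP[Hxy /andP[Hy Hdeg]]]].
have Hyw : forall w, adj V a y w -> w = x.
  move=> w Hw; have [c Hc] := cards1P Hdeg.
  have : x \in [set v | adj V a y v] by rewrite inE adj_sym.
  have : w \in [set v | adj V a y v] by rewrite inE.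
  by rewrite Hc !inE => /eqP -> /eqP ->.
have xy : x != y by apply/eqP=> e; move: Hxy; rewrite e (negPf (adj_irr ora V y)).
have Hsr := sr_pendant ora Hx Hy Hxy Hyw.
have Ha : (alpha (V :\ x :\ y) a + 1 <= alpha V a)%N.
  apply: (alpha_add ora (y := y)) => //.
  - by apply: subset_trans (subsetDl _ _) (subsetDl _ _).
  - by rewrite !inE eqxx.
  move=> w; rewrite !inE => /andP[wy /andP[wx _]]; apply/negP=> /Hyw e.
  by rewrite e eqxx in wx.
have Hd2 : (dim_cyc (V :\ x :\ y) a <= dim_cyc (V :\ x) a)%R.
  by apply: (dim_mono ora); rewrite !inE eq_sym xy Hy.
have cS2 : #|V| = (#|V :\ x :\ y| + 2)%N.
  rewrite (cardsD1 x V) Hx (cardsD1 y (V :\ x)) !inE eq_sym xy Hy /=; lia.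
have Hl := LB ora (V :\ x :\ y).
move: lo; rewrite /lower_optimal cS2 => lo.
exact: (arith2 lo Hsr Ha E3 Hd2 Hl).
Qed.
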